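(* Suppose $n,\Delta\geq2$. Let $(T,r)$ be a rooted tree on $n$ vertices with $\Delta(T)\leq\Delta$, and let $n_0\in\mathbb{N}$ with $n\leq n_0<n^4$. Then there exist pairwise vertex-disjoint rooted subtrees $(T_1,t_1),\ldots,(T_k,t_k)$ of $T$ such that, writing $n_i:=n_0-|T_1\cup\cdots\cup T_i|+1$, (i) $V(T)=\bigcup_{i=1}^kV(T_i)$; (ii) $T_i\subseteq T(t_i)$ for every $i\in[k]$; (iii) the depths of $t_1,\ldots,t_k$ are non-decreasing; (iv) $n_{i-1}^{1/4}\leq|T_i|\leq\frac52\Delta n_{i-1}^{1/4}$ for every $i\in[k]$.
   Context: A rooted subtree $(T_i,t_i)$ is a subtree $T_i$ of $T$ together with a designated vertex $t_i\in V(T_i)$. The depth of a vertex $v$ in $(T,r)$ is the length of the path from $r$ to $v$. For $v\in V(T)$, $T(v)$ is the subtree of $T$ consisting of all vertices $u$ such that the path from $u$ to $r$ contains $v$ (including $v$). $|T_1\cup\cdots\cup T_i|$ is the number of vertices in the union. *)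

(* Defs.v *)
From HB Require Import structures.
From mathcomp Require Import all_boot all_order all_algebra.
From mathcomp Require Import boolp reals exp.
Set Implicit Arguments. Unset Strict Implicit. Unset Printing Implicit Defensive.

Definition simple_graph (V : finType) (e : rel V) : Prop :=
  symmetric e /\ irreflexive e.

Definition has_cycle (V : finType) (e : rel V) : Prop :=
  exists (v0 : V) (p : seq V),
    2 <= size p /\ uniq (v0 :: p) /\ path e v0 p /\ e (last v0 p) v0.

Definition connected_graph (V : finType) (e : rel V) : Prop :=
  forall x y : V, connect e x y.

Definition is_tree (V : finType) (e : rel V) : Prop :=
  simple_graph e /\ connected_graph e /\ ~ has_cycle e.

Definition max_deg_le (V : finType) (e : rel V) (D : nat) : Prop :=
  forall v : V, #|[set u | e v u]| <= D.

Definition induced (V : finType) (e : rel V) (S : {set V}) : rel V :=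
  [rel x y | [&& e x y, x \in S & y \in S]].

(* A subtree of the tree T (given by its vertex set; in a tree a connected
   subgraph is determined by its vertex set, being the induced subgraph):
   a nonempty vertex set inducing a connected subgraph. *)
Definition is_subtree (V : finType) (e : rel V) (S : {set V}) : Prop :=
  S != set0 /\ forall x y, x \in S -> y \in S -> connect (induced e S) x y.

Definition simple_path (V : finType) (e : rel V) (u w : V) (p : seq V) : Prop :=
  path e u p /\ last u p = w /\ uniq (u :: p).

Definition is_depth (V : finType) (e : rel V) (r v : V) (d : nat) : Prop :=
  exists p, simple_path e r v p /\ size p = d.

Definition Tsub (V : finType) (e : rel V) (r v : V) : {set V} :=
  [set u | `[< forall p, simple_path e u r p -> v \in u :: p >]].

(* Main.v *)
Require Import Defs.
From HB Require Import structures.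
From mathcomp Require Import all_boot all_order all_algebra.
From mathcomp Require Import boolp reals exp.
From mathcomp Require Import zify ring lra.
Import Order.TTheory GRing.Theory Num.Theory.
Set Implicit Arguments. Unset Strict Implicit. Unset Printing Implicit Defensive.

Section Tree.
Variables (V : finType) (e : rel V) (r : V).
Hypothesis tree : is_tree e.

Lemma esym : symmetric e. Proof. by case: tree => [[]]. Qed.
Lemma eirr : irreflexive e. Proof. by case: tree => [[]]. Qed.
Lemma econn x y : connect e x y. Proof. by case: tree => _ []. Qed.
Lemma enocyc : ~ has_cycle e. Proof. by case: tree => _ []. Qed.

Definition Pd (v : V) (n : nat) : bool :=
  `[< exists p, path e r p /\ last r p = v /\ size p = n >].

Lemma Pd_ex v : exists n, Pd v n.
Proof.
have /connectP[p pp lp] := econn r v.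
by exists (size p); apply/asboolP; exists p.
Qed.

Definition hh v := ex_minn (Pd_ex v).

Lemma hhP v : exists p, path e r p /\ last r p = v /\ size p = hh v.
Proof. by rewrite /hh; case: ex_minnP => m /asboolP. Qed.

Lemma hh_min v p : path e r p -> last r p = v -> hh v <= size p.
Proof.
move=> pp lp; rewrite /hh; case: ex_minnP => m _ H; apply: H.
by apply/asboolP; exists p.
Qed.

Lemma hh_r : hh r = 0.
Proof. by apply/eqP; rewrite -leqn0; apply: (@hh_min r [::]). Qed.

Lemma hh_eq0 v : hh v = 0 -> v = r.
Proof. by case: (hhP v) => [[|x p]] [_ [lp sp]] h0 //=; rewrite h0 in sp. Qed.

Lemma hh_edge u v : e u v -> hh v <= (hh u).+1.
Proof.
case: (hhP u) => p [pp [lp sp]] euv.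
have := @hh_min v (rcons p v); rewrite size_rcons sp; apply; last by rewrite last_rcons.
by rewrite rcons_path pp lp.
Qed.

Lemma par_ex v : v != r -> exists u, e u v && ((hh u).+1 == hh v).
Proof.
move=> vr; case: (hhP v) => p [pp [lp sp]].
case/lastP: p pp lp sp => [|q w]; first by move=> _ /= lp; rewrite lp eqxx in vr.
rewrite rcons_path last_rcons size_rcons => /andP[pq ew] wv sq.
subst w; exists (last r q); rewrite ew /=.
have h1 := hh_min pq (erefl _).
have h2 := hh_edge ew.
apply/eqP; lia.
Qed.

Definition par v := if [pick u | e u v && ((hh u).+1 == hh v)] is Some u then u else v.

Lemma par_r : par r = r.
Proof. rewrite /par; case: pickP => // u /andP[_ /eqP]; by rewrite hh_r. Qed.

Lemma par_spec v : v != r -> e (par v) v /\ (hh (par v)).+1 = hh v.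
Proof.
move=> vr; rewrite /par; case: pickP => [u /andP[-> /eqP]//|H].
by case: (par_ex vr) => u; rewrite H.
Qed.

Lemma hh_par v : hh (par v) = (hh v).-1.
Proof.
case: (eqVneq v r) => [->|vr]; first by rewrite par_r hh_r.
by case: (par_spec vr) => _ <-.
Qed.

Lemma edge_par (x y : V) : e x y -> (x != r) && (par x == y) || (y != r) && (par y == x).
Proof.
move=> exy.
case: (boolP ((x != r) && (par x == y) || (y != r) && (par y == x))) => // H.
exfalso; apply: enocyc.
pose e' := [rel a b | e a b && ~~ (((a == x) && (b == y)) || ((a == y) && (b == x)))].
have e'sym : symmetric e'.
  move=> a b /=; rewrite esym; congr andb; congr negb.
  by rewrite orbC; congr orb; rewrite andbC.
have toR : forall z, connect e' z r.
  move=> z; move: {2}(hh z) (erefl (hh z)) => m; elim: m z => [|m IH] z hz.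
    by rewrite (hh_eq0 hz) connect0.
  have zr : z != r by apply/eqP => zr; move: hz; rewrite zr hh_r.
  case: (par_spec zr) => ez hp.
  apply: connect_trans (IH (par z) _); last by rewrite hz in hp; case: hp.
  apply: connect1; rewrite /= esym ez /=.
  apply/negP => /orP[/andP[/eqP zx /eqP pzy]|/andP[/eqP zy /eqP pzx]].
    by move: H; rewrite -zx pzy zr eqxx.
  by move: H; rewrite -zy pzx zr eqxx orbT.
have : connect e' x y.
  by apply: connect_trans (toR x) _; rewrite (sym_connect_sym e'sym); apply: toR.
case/connectP => p pp yl.
case: (shortenP pp) yl => p' pp' up' _ yl.
have xy : x != y by apply: contraTneq exy => ->; rewrite eirr.
exists x, p'; split; last split => //; last split.
- case: p' pp' up' yl => [|z [|w q]] //= pp' _ yl.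
    by rewrite yl eqxx in xy.
  by move: pp'; rewrite -yl /= !eqxx /= andbF.
- by apply: sub_path pp'; move=> a b /andP[].
- by rewrite -yl esym.
Qed.


Lemma down_path p x : path e x p -> uniq (x :: p) -> (x == r) || (par x \notin p) ->
  hh (last x p) = hh x + size p.
Proof.
elim: p x => [|y p IH] x /=; first by rewrite addn0.
case/andP=> exy pp /andP[xn up] cond.
case/orP: (edge_par exy) => /andP[xr /eqP pxy].
  by move: cond; rewrite (negbTE xr) pxy inE eqxx.
rewrite IH //; last by rewrite pxy; apply/orP; right; move: xn; rewrite inE negb_or => /andP[].
case: (par_spec xr) => _; rewrite pxy => <-; by rewrite addSnnS.
Qed.

Lemma depth_hh v d : is_depth e r v d -> d = hh v.
Proof.
case=> p [[pp [lp up]] sp].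
by rewrite -lp down_path // ?eqxx // hh_r sp.
Qed.

Definition desc t : {set V} := [set u | `[< exists j, iter j par u = t >]].

Lemma descP t u : reflect (exists j, iter j par u = t) (u \in desc t).
Proof. by rewrite inE; apply: (iffP (asboolP _)). Qed.

Lemma desc_refl u : u \in desc u.
Proof. by apply/descP; exists 0. Qed.

Lemma desc_trans u v w : u \in desc v -> v \in desc w -> u \in desc w.
Proof.
move=> /descP[j1 h1] /descP[j2 h2]; apply/descP; exists (j2 + j1).
by rewrite iterD h1.
Qed.

Lemma desc_child c : c \in desc (par c).
Proof. by apply/descP; exists 1. Qed.

Lemma desc_par t u : u \in desc t -> u != t -> par u \in desc t.
Proof.
move=> /descP[[|j] h] ut; first by rewrite -h eqxx in ut.
by apply/descP; exists j; rewrite -iterSr.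
Qed.

Lemma iter_hh j u : hh (iter j par u) = hh u - j.
Proof. by elim: j => [|j IH]; rewrite ?subn0 //= hh_par IH subnS. Qed.

Lemma desc_hh t u : u \in desc t -> hh t <= hh u.
Proof. by move=> /descP[j <-]; rewrite iter_hh leq_subr. Qed.

Lemma desc_root u : u \in desc r.
Proof.
apply/descP; exists (hh u); apply: hh_eq0; by rewrite iter_hh subnn.
Qed.

Lemma par_iter_r j : iter j par r = r.
Proof. by elim: j => //= j ->; rewrite par_r. Qed.

Definition children x : {set V} := [set c | (c != r) && (par c == x)].

Lemma desc_split x u : u \in desc x -> u = x \/ exists2 c, c \in children x & u \in desc c.
Proof.
move=> /descP[j]; elim: j u => [|j IH] u /=; first by left.
case: (eqVneq (iter j par u) r) => [ir|ir hx].
  by rewrite ir par_r => hx; apply: IH; rewrite ir.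
right; exists (iter j par u); first by rewrite inE ir hx eqxx.
by apply/descP; exists j.
Qed.

Lemma children_hh x c : c \in children x -> hh c = (hh x).+1.
Proof.
rewrite inE => /andP[cr /eqP <-]; by case: (par_spec cr).
Qed.

Lemma sibling x c c' u : c \in children x -> c' \in children x ->
  u \in desc c -> u \in desc c' -> c = c'.
Proof.
move=> cx c'x /descP[j hj] /descP[j' hj'].
have h1 := children_hh cx; have h2 := children_hh c'x.
have e1 := iter_hh j u; have e2 := iter_hh j' u.
rewrite hj in e1; rewrite hj' in e2.
have jj : j = j' by lia.
by rewrite -hj -hj' jj.
Qed.

Lemma not_desc_child x c : c \in children x -> x \notin desc c.
Proof.
move=> cx; apply/negP => /desc_hh; rewrite (children_hh cx); by rewrite ltnn.
Qed.

Lemma child_desc x c : c \in children x -> c \in desc x.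
Proof. by rewrite inE => /andP[_ /eqP <-]; apply: desc_child. Qed.

Lemma in_Tsub t u : u \in desc t -> u \in Tsub e r t.
Proof.
move=> ut; rewrite inE; apply/asboolP => p [pp [lp _]].
elim: p u ut pp lp => [|y p IH] u ut /=.
  move=> _ ur; move: ut; rewrite ur => /descP[j]; rewrite par_iter_r => ->.
  by rewrite inE.
case/andP => euy pp lp.
case: (eqVneq u t) => [->|utn]; first by rewrite inE eqxx.
rewrite inE; apply/orP; right; apply: IH pp lp.
case/orP: (edge_par euy) => /andP[ur /eqP pu].
  by rewrite -pu; apply: desc_par.
by apply: desc_trans ut; rewrite -pu; apply: desc_child.
Qed.

Definition piece t (P : {set V}) :=
  [/\ t \in P, P \subset desc t & forall u, u \in P -> u != t -> par u \in P].

Lemma piece_subtree t P : piece t P -> is_subtree e P.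
Proof.
case=> tP sP cl; split; first by apply/set0Pn; exists t.
have isym : symmetric (induced e P).
  by move=> a b; rewrite /induced /= esym; congr andb; apply: andbC.
have toT : forall u, u \in P -> connect (induced e P) u t.
  move=> u; move: {2}(hh u) (erefl (hh u)) => m; elim: m u => [|m IH] u hu uP.
    have ur := hh_eq0 hu; move: (subsetP sP _ uP); rewrite ur => /descP[j].
    by rewrite par_iter_r => ->; apply: connect0.
  case: (eqVneq u t) => [->|ut]; first by apply: connect0.
  have ur : u != r by apply/eqP => ur; move: hu; rewrite ur hh_r.
  case: (par_spec ur) => eu hp.
  apply: connect_trans (IH (par u) _ (cl _ uP ut)); last by rewrite hu in hp; case: hp.
  by apply: connect1; rewrite /induced /= esym eu uP cl.
move=> x y xP yP; apply: connect_trans (toT _ xP) _.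
by rewrite (sym_connect_sym isym); apply: toT.
Qed.



Lemma card_children x D : max_deg_le e D -> #|children x| <= D.
Proof.
move=> hd; apply: leq_trans (hd x); apply: subset_leq_card; apply/subsetP => c.
rewrite !inE => /andP[cr /eqP <-]; case: (par_spec cr) => -> _; done.
Qed.

Lemma card_bigcup_le (I : finType) (A : {pred I}) (F : I -> {set V}) :
  #|\bigcup_(i in A) F i| <= \sum_(i in A) #|F i|.
Proof.
apply: (big_ind2 (fun (X : {set V}) (m : nat) => #|X| <= m)); first by rewrite cards0.
move=> X1 m1 X2 m2 h1 h2; apply: leq_trans (leq_card_setU _ _) _; exact: leq_add.
by [].
Qed.

Lemma descent D K : max_deg_le e D -> 0 < K -> forall x a, K <= #|desc x| -> a < K ->
  exists P : {set V}, [/\ piece x P,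
    (forall u, u \notin P -> par u \in P -> u != r -> K <= #|desc u|),
    K <= a + #|P| & a + #|P| <= K + D * K.-1].
Proof.
move=> hd K0 x; move: {2}#|desc x| (leqnn #|desc x|) => N; elim: N x => [|N IH] x hN.
  move=> a; have : #|desc x| = 0 by apply/eqP; rewrite -leqn0.
  by move/card0_eq => H; have := H x; rewrite desc_refl.
move=> a Kx aK.
set Sm := [set c in children x | #|desc c| < K].
set S := x |: \bigcup_(c in Sm) desc c.
have S_desc : S \subset desc x.
  apply/subsetP => u /setU1P[->|/bigcupP[c]]; first exact: desc_refl.
  by rewrite inE => /andP[cx _] uc; apply: desc_trans uc (child_desc cx).
have S_cl : forall u, u \in S -> u != x -> par u \in S.
  move=> u /setU1P[->|/bigcupP[c cS uc]]; first by rewrite eqxx.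
  move=> ux; case: (eqVneq u c) => [uc'|uc'].
    move: cS; rewrite uc' !inE => /andP[/andP[_ /eqP ->] _]; by rewrite eqxx.
  by apply/setU1P; right; apply/bigcupP; exists c => //; apply: desc_par.
have S_bd : forall u, u \notin S -> par u \in S -> u != r -> K <= #|desc u|.
  move=> u uS /setU1P[pu|/bigcupP[c cS uc]] ur.
    rewrite leqNgt; apply/negP => small; move: uS; rewrite in_setU1 negb_or => /andP[_].
    move/bigcupP; apply; exists u; last exact: desc_refl.
    by rewrite !inE ur pu eqxx small.
  move: uS; rewrite in_setU1 negb_or => /andP[_ /bigcupP]; case; exists c => //.
  exact: desc_trans (desc_child u) uc.
have S_card : #|S| <= 1 + D * K.-1.
  apply: leq_trans (leq_card_setU _ _) _; rewrite cards1 leq_add2l.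
  apply: leq_trans (card_bigcup_le _ _) _.
  apply: leq_trans (_ : \sum_(c in Sm) K.-1 <= _).
    apply: leq_sum => c; rewrite inE => /andP[_ small]; by rewrite -ltnS prednK.
  rewrite sum_nat_const; apply: leq_mul => //.
  apply: leq_trans (card_children x hd); apply: subset_leq_card.
  by apply/subsetP => c; rewrite inE => /andP[].
have xS : x \in S by rewrite in_setU1 eqxx.
case: (leqP K (a + #|S|)) => haS.
  exists S; split => //; lia.
have [c cx bigc] : exists2 c, c \in children x & K <= #|desc c|.
  case: (boolP [exists c in children x, K <= #|desc c|]) => [/exists_inP //|H].
  exfalso.
  have : desc x \subset S.
    apply/subsetP => u /desc_split [->//|[c cx uc]].
    apply/setU1P; right; apply/bigcupP; exists c => //.
    rewrite inE cx /= ltnNge; apply/negP => bc; apply: (negP H); apply/exists_inP; by exists c.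
  move/subset_leq_card => h; lia.
have cN : #|desc c| <= N.
  rewrite -ltnS; apply: leq_trans hN; apply: proper_card; apply/properP; split.
    by apply/subsetP => u uc; apply: desc_trans uc (child_desc cx).
  by exists x; [apply: desc_refl | apply: not_desc_child].
case: (IH c cN (a + #|S|) bigc haS) => Pc [[cPc Pcd Pccl] Pcbd Pc1 Pc2].
have dis : [disjoint S & Pc].
  rewrite -setI_eq0; apply/eqP/setP => u; rewrite in_setI in_set0; apply/negP => /andP[uS uP].
  have ud := subsetP Pcd _ uP.
  case/setU1P: uS => [ux|/bigcupP[c' c'S uc']].
    by move: ud; rewrite ux => ud; move: (not_desc_child cx); rewrite ud.
  move: c'S; rewrite inE => /andP[c'x small].
  have cc := sibling cx c'x ud uc'; rewrite -cc in small; lia.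
have cardU : #|S :|: Pc| = #|S| + #|Pc|.
  by apply/eqP; rewrite (leq_card_setU S Pc).2.
exists (S :|: Pc); split; last first.
- by rewrite cardU addnA.
- by rewrite cardU addnA.
- move=> u; rewrite in_setU negb_or => /andP[uS uPc] /setUP[puS|puPc] ur.
    exact: S_bd.
  exact: Pcbd.
- split; first by rewrite inE xS.
  + rewrite subUset S_desc /=; apply: subset_trans Pcd _.
    by apply/subsetP => u uc; apply: desc_trans uc (child_desc cx).
  + move=> u /setUP[uS|uPc] ux.
      by rewrite inE S_cl.
    case: (eqVneq u c) => [->|uc].
      by move: cx; rewrite inE => /andP[_ /eqP ->]; rewrite inE xS.
    by rewrite inE Pccl ?orbT.
Qed.

End Tree.

Section Main.
Local Open Scope ring_scope.
Variables (R : realType) (V : finType) (e : rel V) (r : V) (D n0 : nat).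
Hypotheses (tree : is_tree e) (hd : max_deg_le e D) (D2 : (2 <= D)%N) (hn0 : (#|V| <= n0)%N).

Local Notation par := (@par V e r tree).
Local Notation hh := (@hh V e r tree).
Local Notation desc := (@desc V e r tree).

Definition sR (X : {set V}) : R := (n0%:R - #|X|%:R + 1) `^ (1 / 4%:R).

Lemma sR_ge1 X : 1 <= sR X.
Proof.
have hX : (#|X| <= n0)%N by apply: leq_trans (max_card _) hn0.
rewrite /sR; apply: le_trans (_ : 1 `^ (1 / 4%:R) <= _); first by rewrite powR1.
have : (#|X|%:R <= n0%:R :> R) by rewrite ler_nat.
move=> h; apply: (@ge0_ler_powR R (1/4%:R)); rewrite ?nnegrE; try lra.
Qed.

Lemma sR_mono (X Y : {set V}) : (#|X| <= #|Y|)%N -> sR Y <= sR X.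
Proof.
move=> hXY.
have hY : (#|Y| <= n0)%N by apply: leq_trans (max_card _) hn0.
have h1 : (#|X|%:R <= #|Y|%:R :> R) by rewrite ler_nat.
have h2 : (#|Y|%:R <= n0%:R :> R) by rewrite ler_nat.
rewrite /sR; apply: (@ge0_ler_powR R (1/4%:R)); rewrite ?nnegrE; lra.
Qed.

Lemma bigcup_recl (F : nat -> {set V}) i :
  \bigcup_(j < i.+1) F j = F 0%N :|: \bigcup_(j < i) F j.+1.
Proof. by rewrite -(big_mkord xpredT F) big_nat_recl // big_mkord. Qed.

Lemma disj_helper (A B C : {set V}) : A \subset ~: B -> C \subset B -> [disjoint A & C].
Proof.
move=> h1 h2; rewrite -setI_eq0; apply/eqP/setP => u; rewrite in_setI in_set0.
apply/negP => /andP[/(subsetP h1) uA /(subsetP h2) uC]; by rewrite in_setC uC in uA.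
Qed.

Lemma size_bound (s : R) (K p : nat) : 1 <= s -> (K.-1)%:R < s -> (0 < K)%N ->
  (p <= K + D * K.-1)%N -> p%:R <= 5%:R / 2%:R * D%:R * s.
Proof.
move=> s1 hK K0 hp.
have hp' : p%:R <= (K.-1)%:R + 1 + D%:R * (K.-1)%:R :> R.
  have -> : (K.-1)%:R + 1 = K%:R :> R by rewrite -[in RHS](prednK K0) -natr1.
  by rewrite -natrM -natrD ler_nat.
have hD : (2 : R) <= D%:R by rewrite (ler_nat R 2 D).
have x0 : (0 : R) <= (K.-1)%:R by [].
have : D%:R * (K.-1)%:R <= D%:R * s :> R by rewrite ler_wpM2l // ltW.
nra.
Qed.




Definition Concl (U : {set V}) k (Ts : nat -> {set V}) (ts : nat -> V) :=
  [/\ (forall i, (i < k)%N -> piece r tree (ts i) (Ts i) /\ Ts i \subset ~: U),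
      (forall i j, (i < k)%N -> (j < k)%N -> i != j -> [disjoint Ts i & Ts j]),
      U :|: \bigcup_(i < k) Ts i = [set: V],
      (forall i j, (i <= j)%N -> (j < k)%N -> (hh (ts i) <= hh (ts j))%N) &
      (forall i, (i < k)%N ->
         sR (U :|: \bigcup_(j < i) Ts j) <= #|Ts i|%:R /\
         #|Ts i|%:R <= 5%:R / 2%:R * D%:R * sR (U :|: \bigcup_(j < i) Ts j))].

Lemma base_case U : ~: U = set0 -> Concl U 0 (fun _ => set0) (fun _ => r).
Proof.
move=> E; split => //; rewrite big_ord0 setU0.
by rewrite -[U]setCK E setC0.
Qed.

Lemma main_iter N : forall U : {set V}, (#|~: U| <= N)%N ->
  (forall u, u \in U -> par u \in U) ->
  (forall u, u \notin U -> (par u \in U \/ u = r) -> sR U <= #|desc u|%:R) ->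
  exists k Ts ts, Concl U k Ts ts.
Proof.
elim: N => [|N IH] U hN upc roots.
  exists 0%N, (fun _ => set0), (fun _ => r); apply: base_case.
  by apply/eqP; rewrite -cards_eq0 -leqn0.
case: (set_0Vmem (~: U)) => [E|[t0 t0U]].
  by exists 0%N, (fun _ => set0), (fun _ => r); apply: base_case.
case: (arg_minnP hh t0U) => t tU tmin.
have tU' : t \notin U by rewrite -in_setC.
have troot : par t \in U \/ t = r.
  case: (eqVneq t r) => [->|tr]; [by right | left].
  apply/negPn/negP => ptU; have : par t \in ~: U by rewrite in_setC.
  move/tmin.
  by case: (par_spec tree tr) => _ <-; rewrite ltnn.
have sRt := roots t tU' troot.
pose Pk := fun K : nat => sR U <= K%:R.
have exK : exists K, Pk K by exists #|desc t|.
case: (ex_minnP exK) => K hK Kmin.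
have s1 := sR_ge1 U.
have K0 : (0 < K)%N.
  rewrite lt0n; apply/negP => /eqP K0; move: hK; rewrite /Pk K0.
  by move=> h; have := le_trans s1 h; rewrite ler10.
have hKm : (K.-1)%:R < sR U.
  rewrite ltNge; apply/negP => h; have := Kmin _ h; rewrite leqNgt => /negP; apply.
  by rewrite prednK ?leqnn.
have Kt : (K <= #|desc t|)%N by apply: Kmin.
case: (@descent V e r tree D K hd K0 t 0%N Kt K0) => P [[tP Pd Pcl] Pbd P1 P2].
have desc_W : desc t \subset ~: U.
  apply/subsetP => u /descP [j hj]; rewrite in_setC; apply/negP => uU.
  have : iter j par u \in U by elim: j {hj} => //= j /upc.
  by rewrite hj (negbTE tU').
have PW : P \subset ~: U by apply: subset_trans Pd desc_W.
set U' := U :|: P.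
have upc' : forall u, u \in U' -> par u \in U'.
  move=> u /setUP[uU|uP]; first by rewrite in_setU upc.
  case: (eqVneq u t) => [ut|ut]; last by rewrite in_setU Pcl ?orbT.
  rewrite ut; case: troot => [pt|tr]; first by rewrite in_setU pt.
  by rewrite tr par_r -tr in_setU tP orbT.
have sRU' : sR U' <= sR U by apply: sR_mono; apply: subset_leq_card; apply: subsetUl.
have roots' : forall u, u \notin U' -> (par u \in U' \/ u = r) -> sR U' <= #|desc u|%:R.
  move=> u; rewrite in_setU negb_or => /andP[uU uP] hu.
  apply: le_trans sRU' _.
  case: (eqVneq u r) => [ur|ur]; first by apply: roots => //; right.
  case: hu => [/setUP[puU|puP]|]; last by move=> ur'; rewrite ur' eqxx in ur.
    by apply: roots => //; left.
  have := Pbd u uP puP ur => hKu.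
  apply: le_trans hK _; by rewrite ler_nat.
have hN' : (#|~: U'| <= N)%N.
  rewrite -ltnS; apply: leq_trans hN; apply: proper_card; apply/properP; split.
    by rewrite setCS subsetUl.
  by exists t; rewrite ?in_setC // in_setU tP orbT.
case: (IH U' hN' upc' roots') => k [Ts [ts [C1 C2 C3 C4 C5]]].
have sub' : ~: U' \subset ~: U by rewrite setCS subsetUl.
exists k.+1, (fun i => if i is i'.+1 then Ts i' else P), (fun i => if i is i'.+1 then ts i' else t).
split.
- case=> [|i] /= hi; first by split.
  by case: (C1 i hi) => h1 h2; split => //; apply: subset_trans h2 sub'.
- case=> [|i] [|j] //= hi hj hij.
  + by case: (C1 j hj) => _ h; rewrite disjoint_sym; apply: disj_helper h (subsetUr _ _).
  + by case: (C1 i hi) => _ h; apply: disj_helper h (subsetUr _ _).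
  + by apply: C2.
- by rewrite (bigcup_recl (fun i => if i is i'.+1 then Ts i' else P)) /= setUA.
- case=> [|i] [|j] //= hij hj.
  + apply: tmin; case: (C1 j hj) => [[tj _ _] h]; exact: subsetP sub' _ (subsetP h _ tj).
  + exact: C4.
- case=> [|i] /= hi.
    rewrite big_ord0 setU0; split; first by apply: le_trans hK _; rewrite ler_nat.
    by apply: size_bound s1 hKm K0 _.
  by rewrite (bigcup_recl (fun i => if i is i'.+1 then Ts i' else P)) /= setUA; apply: C5.
Qed.

End Main.

Unset Implicit Arguments. Set Strict Implicit.

Theorem lemma3p4 (R : realType) (V : finType) (e : rel V) (r : V)
    (n D n0 : nat) :
  (2 <= n)%N -> (2 <= D)%N -> #|V| = n ->
  is_tree e -> max_deg_le e D ->
  (n <= n0)%N -> (n0 < n ^ 4)%N ->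
  exists (k : nat) (Ts : nat -> {set V}) (ts : nat -> V),
    (* rooted subtrees (T_i, t_i), indexed 0 <= i < k *)
    (forall i, (i < k)%N -> is_subtree e (Ts i) /\ ts i \in Ts i) /\
    (* pairwise vertex-disjoint *)
    (forall i j, (i < k)%N -> (j < k)%N -> i != j -> [disjoint Ts i & Ts j]) /\
    (* (i) they cover V(T) *)
    (\bigcup_(i < k) Ts i = [set: V]) /\
    (* (ii) T_i is contained in T(t_i) *)
    (forall i, (i < k)%N -> Ts i \subset Tsub e r (ts i)) /\
    (* (iii) depths of t_1, ..., t_k are non-decreasing *)
    (forall i j d1 d2, (i <= j)%N -> (j < k)%N ->
        is_depth e r (ts i) d1 -> is_depth e r (ts j) d2 -> (d1 <= d2)%N) /\
    (* (iv) with n_{i-1} = n0 - |T_1 u ... u T_{i-1}| + 1 *)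
    (forall i, (i < k)%N ->
        let m : R := (n0%:R - #|\bigcup_(j < i) Ts j|%:R + 1)%R in
        (m `^ (1 / 4%:R) <= #|Ts i|%:R)%R /\
        (#|Ts i|%:R <= 5%:R / 2%:R * D%:R * m `^ (1 / 4%:R))%R).
Proof.
move=> n2 D2 hV tree hd hn hn4.
have hn0 : (#|V| <= n0)%N by rewrite hV.
have upc : forall u, u \in (set0 : {set V}) -> par r tree u \in (set0 : {set V}) by move=> u; rewrite in_set0.
have roots : forall u, u \notin (set0 : {set V}) -> (par r tree u \in (set0 : {set V}) \/ u = r) ->
    (sR R n0 (set0 : {set V}) <= #|desc r tree u|%:R)%R.
  move=> u _ [|->]; first by rewrite in_set0.
  have -> : desc r tree r = [set: V] by apply/setP => v; rewrite in_setT desc_root.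
  rewrite cardsT hV /sR cards0 subr0.
  have h4 : ((n0%:R + 1 : R) <= n%:R ^+ 4)%R by rewrite natr1 -natrX ler_nat.
  apply: (@le_trans _ _ ((n%:R ^+ 4) `^ (1 / 4%:R)))%R.
    by apply: (@ge0_ler_powR R (1/4%:R)); rewrite ?nnegrE ?exprn_ge0 ?addr_ge0 ?divr_ge0.
  rewrite -powR_mulrn // -powRrM.
  have -> : (4%:R * (1 / 4%:R) : R)%R = 1%R by rewrite mul1r mulfV // pnatr_eq0.
  by rewrite powRr1.
case: (@main_iter R V e r D n0 tree hd D2 hn0 _ set0 (leqnn _) upc roots) => k [Ts [ts [C1 C2 C3 C4 C5]]].
exists k, Ts, ts; split; last split; last split; last split; last split.
- move=> i hi; case: (C1 i hi) => [[tP Pd Pcl] _]; split => //.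
  by apply: (@piece_subtree V e r tree (ts i)); split.
- exact: C2.
- by rewrite -C3 set0U.
- move=> i hi; case: (C1 i hi) => [[tP Pd Pcl] _]; apply/subsetP => u uP.
  by apply: in_Tsub; apply: (subsetP Pd).
- move=> i j d1 d2 hij hj /(depth_hh tree) -> /(depth_hh tree) ->; exact: C4.
- move=> i hi /=; have := C5 i hi; rewrite set0U; done.
Qed.
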